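(* For every positive integer $n$, $$E(n)=\sum_{d\mid n}\mu(d)\left(\left\lfloor\frac{n}{2d}\right\rfloor+1\right),$$ where $\mu$ is the Möbius function.
   Context: Define on triples of integers $\Gamma_{0,1}(\tau_1,\tau_2,\tau_3)=(\tau_2,\tau_3,\tau_2+\tau_3)$ and $\Gamma_{0,2}(\tau_1,\tau_2,\tau_3)=(\tau_1,\tau_3,\tau_1+\tau_3)$. The $(1,0)$-Euclid tree is the set of triples obtained from the root $(1,1,2)$ by finitely many (possibly zero) applications of $\Gamma_{0,1},\Gamma_{0,2}$. Define $E(1)=1$ and, for $n\ge2$, $E(n)$ as the number of distinct triples $T$ on the $(1,0)$-Euclid tree whose largest entry equals $n$. *)

(* Defs.v *)
From HB Require Import structures.
From mathcomp Require Import all_boot all_order all_algebra.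
Set Implicit Arguments. Unset Strict Implicit. Unset Printing Implicit Defensive.
Import Order.TTheory GRing.Theory Num.Theory.

(* Triples (tau1, tau2, tau3) of naturals: every triple on
   the (1,0)-Euclid tree has positive entries, so nat is no restriction. *)
Definition triple := (nat * nat * nat)%type.

Definition Gamma01 (t : triple) : triple :=
  let: (t1, t2, t3) := t in (t2, t3, t2 + t3).
Definition Gamma02 (t : triple) : triple :=
  let: (t1, t2, t3) := t in (t1, t3, t1 + t3).

Inductive on_euclid_tree : triple -> Prop :=
  | et_root : on_euclid_tree (1, 1, 2)
  | et_g1 t : on_euclid_tree t -> on_euclid_tree (Gamma01 t)
  | et_g2 t : on_euclid_tree t -> on_euclid_tree (Gamma02 t).

Definition largest (t : triple) : nat :=
  let: (t1, t2, t3) := t in maxn t1 (maxn t2 t3).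

Definition E_is (n k : nat) : Prop :=
  if n == 1%N then k = 1%N
  else exists s : seq triple,
      [/\ uniq s,
          (forall t, t \in s <-> on_euclid_tree t /\ largest t = n)
        & size s = k].

Definition mobius (d : nat) : int :=
  if (0 < d)%N && all (fun p => logn p d <= 1)%N (primes d)
  then ((-1) ^+ size (primes d))%R else 0%R.

(* Main.v *)
Require Import Defs.
From HB Require Import structures.
From mathcomp Require Import all_boot all_order all_algebra.
From mathcomp Require Import zify.
Import Order.TTheory GRing.Theory Num.Theory.
Definition good (t : triple) : bool :=
  let: (a, b, c) := t in
  [&& c == a + b, 0 < a, a <= b, coprime a b & (a == b) ==> (a == 1)].

Lemma tree_good t : on_euclid_tree t -> good t.
Proof.
elim=> [|[[a b] c] _ IH|[[a b] c] _ IH] //=; move: IH => /and5P[/eqP-> a0 ab cab _].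
all: rewrite /coprime in cab.
- rewrite eqxx /= (leq_trans a0 ab) leq_addl /coprime gcdnDr gcdnC cab /=.
  by apply/implyP => /eqP h; lia.
- rewrite eqxx /= a0 leq_addr /coprime gcdnDl cab /=.
  by apply/implyP => /eqP h; lia.
Qed.

Lemma good_tree t : good t -> on_euclid_tree t.
Proof.
case: t => [[a b] c].
elim: b {-2}b (leqnn b) a c => [|N IH] b bN a c /=.
  by move=> /and5P[_ a0 ab]; lia.
move=> /and5P[/eqP-> a0 ab cab aeq].
have [eab|nab] := eqVneq a b.
  subst b; move: aeq; rewrite eqxx /= => /eqP->; exact: et_root.
have ltab : a < b by rewrite ltn_neqAle nab ab.
have bsub : b = a + (b - a) by lia.
case: (leqP a (b - a)) => h.
- have -> : (a, b, a + b) = Gamma02 (a, b - a, b) by [].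
  apply: et_g2; apply: (IH (b - a)); first by lia.
  rewrite /= -bsub eqxx a0 h /=.
  have cop : coprime a (b - a) by move: cab; rewrite {1}bsub /coprime gcdnDl.
  rewrite cop /=; apply/implyP => /eqP e.
  by move: cop; rewrite -e /coprime gcdnn.
- have -> : (a, b, a + b) = Gamma01 (b - a, a, b) by [].
  apply: et_g1; apply: (IH a); first by lia.
  rewrite /= subnK ?eqxx ?(ltnW ltab) //=.
  have cop : coprime (b - a) a by rewrite coprime_sym; move: cab; rewrite {1}bsub /coprime gcdnDl.
  rewrite cop (ltnW h) /=.
  rewrite subn_gt0 ltab /=; apply/implyP => /eqP e; lia.
Qed.

Local Open Scope ring_scope.


Lemma mob_pp p d : prime p -> (p %| d)%N -> mobius (p * d) = 0.
Proof.
move=> pp pd; rewrite /mobius.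
have [d0|dpos] := posnP d; first by rewrite d0 muln0.
have pg := prime_gt0 pp.
have -> : all (fun q => logn q (p * d) <= 1)%N (primes (p * d)) = false.
  apply/negbTE/allPn; exists p.
    by rewrite mem_primes pp muln_gt0 pg dpos dvdn_mulr.
  by rewrite lognM // logn_prime // eqxx -ltnNge /= ltnS lognE pp dpos pd.
by rewrite andbF.
Qed.

Lemma mob_p p d : prime p -> ~~ (p %| d)%N -> (0 < d)%N -> mobius (p * d) = - mobius d.
Proof.
move=> pp npd dpos; rewrite /mobius.
have pg := prime_gt0 pp.
have eqm : primes (p * d) =i p :: primes d.
  move=> q; rewrite primesM // in_cons; congr (_ || _).
  rewrite mem_primes pg /=; apply/idP/eqP => [/andP[qp] | ->]; [by move=> qd; apply/eqP; rewrite -dvdn_prime2 | by rewrite pp dvdnn].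
have pnd : p \notin primes d by rewrite mem_primes (negbTE npd) !andbF.
have pe : perm_eq (primes (p * d)) (p :: primes d).
  by apply: uniq_perm; rewrite ?primes_uniq //= pnd primes_uniq.
rewrite (perm_size pe) /= muln_gt0 pg dpos /=.
rewrite (perm_all _ pe) /= lognM // logn_prime // eqxx.
rewrite lognE (negbTE npd) !andbF /=.
have -> : all (fun q => logn q (p * d) <= 1)%N (primes d) =
          all (fun q => logn q d <= 1)%N (primes d).
  apply: eq_in_all => q; rewrite mem_primes => /and3P[qp _ qd].
  rewrite lognM // logn_prime //.
  case: eqP => // qe; subst q; by rewrite qd in npd.
by case: ifP => _; rewrite ?oppr0 // exprS mulN1r.
Qed.

Lemma mob_sum g : (0 < g)%N -> \sum_(d <- divisors g) mobius d = (g == 1%N)%:R.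
Proof.
move=> gpos.
have [->|g1] := eqVneq g 1%N; first by rewrite big_seq1.
have gt1 : (1 < g)%N by rewrite ltn_neqAle eq_sym g1.
set p := pdiv g.
have pp : prime p by rewrite pdiv_prime.
have pdg : (p %| g)%N by rewrite pdiv_dvd.
have pg := prime_gt0 pp.
set h := (g %/ p)%N.
have ghp : g = (p * h)%N by rewrite /h mulnC divnK.
have hpos : (0 < h)%N by move: gpos; rewrite ghp muln_gt0 => /andP[].
rewrite (bigID (fun d => p %| d)%N) /=.
have e1 : perm_eq [seq d <- divisors g | (p %| d)%N] [seq (p * d)%N | d <- divisors h].
  apply: uniq_perm.
  - by rewrite filter_uniq ?divisors_uniq.
  - by rewrite map_inj_uniq ?divisors_uniq //; by move=> a b /eqP; rewrite eqn_pmul2l // => /eqP.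
  move=> x; rewrite mem_filter -dvdn_divisors //.
  apply/andP/mapP => [[pd xd] | [y yh ->]].
    exists (x %/ p)%N; first by rewrite -dvdn_divisors // /h dvdn_divLR // divnK.
    by rewrite mulnC divnK.
  by rewrite dvdn_mulr // ghp dvdn_pmul2l // dvdn_divisors.
rewrite -big_filter (perm_big _ e1) big_map /=.
rewrite (bigID (fun d => p %| d)%N) /= big1 ?add0r; last by move=> d pd; rewrite mob_pp.
have e2 : perm_eq [seq d <- divisors h | ~~ (p %| d)%N] [seq d <- divisors g | ~~ (p %| d)%N].
  apply: uniq_perm; rewrite ?filter_uniq ?divisors_uniq //.
  move=> x; rewrite !mem_filter -!dvdn_divisors //.
  apply/andP/andP => [[px xh] | [px xg]]; split => //.
    by rewrite ghp dvdn_mull.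
  have : coprime x p by rewrite coprime_sym prime_coprime.
  by move/Gauss_dvdr <-; rewrite -ghp.
rewrite -[X in _ + X]big_filter -(perm_big _ e2) big_filter -big_split /=.
rewrite big_seq_cond; apply: big1 => d /andP[dh pd].
rewrite mob_p ?addNr //.
by move: dh; rewrite -dvdn_divisors // => /dvdn_gt0; apply.
Qed.

Lemma count_cop m n : (0 < n)%N ->
  (count (fun x => coprime x n) (iota 1 m))%:Z =
  \sum_(d <- divisors n) mobius d * (m %/ d)%N%:Z.
Proof.
move=> npos; elim: m => [|m IH].
  by rewrite big1 // => d _; rewrite div0n mulr0.
have -> : iota 1 m.+1 = iota 1 m ++ [:: m.+1].
  by rewrite -[m.+1]addn1 iotaD /= add1n addn1.
rewrite count_cat PoszD IH /= addn0.
have e : perm_eq [seq d <- divisors n | (d %| m.+1)%N] (divisors (gcdn m.+1 n)).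
  apply: uniq_perm; rewrite ?filter_uniq ?divisors_uniq //.
  move=> x; rewrite mem_filter -!dvdn_divisors ?gcdn_gt0 ?npos ?orbT //.
  by rewrite dvdn_gcd andbC.
have -> : \sum_(d <- divisors n) mobius d * (m.+1 %/ d)%N%:Z =
   \sum_(d <- divisors n) mobius d * (m %/ d)%N%:Z +
   \sum_(d <- divisors n | (d %| m.+1)%N) mobius d.
  rewrite [X in _ = _ + X]big_mkcond -big_split /= !big_seq; apply: eq_bigr => d dn.
  have dpos : (0 < d)%N by move: dn; rewrite -dvdn_divisors // => /dvdn_gt0; apply.
  rewrite divnS // PoszD mulrDr addrC; congr (_ + _).
  by case: (d %| m.+1)%N; rewrite ?mulr1 ?mulr0.
rewrite -[X in _ = _ + X]big_filter (perm_big _ e) mob_sum ?gcdn_gt0 ?npos ?orbT //.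
by rewrite /coprime gcdnC; case: eqP.
Qed.
Theorem corollary3p5 (n : nat) (hn : (0 < n)%N) :
  exists k : nat, E_is n k /\
    k%:Z = \sum_(d <- divisors n) mobius d * ((n %/ (2 * d))%N%:Z + 1).
Proof.
exists (count (fun x => coprime x n) (iota 1 n./2) + (n == 1%N))%N; split.
  rewrite /E_is; have [n1|n1] := eqVneq n 1%N; first by rewrite n1.
  exists [seq (x, (n - x)%N, n) | x <- [seq x <- iota 1 n./2 | coprime x n]].
  split.
  - rewrite map_inj_uniq ?filter_uniq ?iota_uniq //.
    by move=> x y [].
  - move=> [[a b] c]; split.
      move=> /mapP[x]; rewrite mem_filter mem_iota => /andP[cx xr] [-> -> ->].
      split; last by rewrite /largest; lia.
      apply: good_tree => /=.
      have xn : (x <= n)%N by move: xr; rewrite -divn2; lia.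
      rewrite subnKC // eqxx /=.
      have cop : coprime x (n - x) by rewrite /coprime -gcdnDl subnKC.
      rewrite cop /=; apply/and3P; split; first by lia.
        by move: xr; rewrite -divn2; lia.
      apply/implyP => /eqP e; move: cop; by rewrite -e /coprime gcdnn.
    move=> [/tree_good /= /and5P[/eqP-> a0 ab cab aeq]].
    rewrite /largest => ln.
    have nab : n = (a + b)%N by lia.
    apply/mapP; exists a.
      rewrite mem_filter mem_iota nab /coprime gcdnDl -/(coprime a b) cab /= -divn2; lia.
    by rewrite nab addKn.
  - by rewrite size_map size_filter addn0.
under eq_bigr do rewrite mulrDr mulr1.
rewrite big_split /= mob_sum // PoszD.
congr (_ + _); last by case: (n == 1%N).
rewrite (count_cop _ _ hn); apply: eq_bigr => d _.
by rewrite divnMA divn2.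
Qed.
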